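(* Let $n,m\geq1$, $G=S_n^m$ and $H=S_n$ embedded diagonally in $G$. For $g=(\sigma_1,\dots,\sigma_m)\in G$: (1) $H_g=\mathrm{Aut}_{F_m^0}(Q_{(\sigma_i)})=C_{S_n}(\phi_{(\sigma_i)}(F_m^0))$ (identifying $H$ with $S_n$). (2) For $(\sigma_i),(\tau_i)\in S_n^m$ we have $(\sigma_i)\sim(\tau_i)$ if and only if $Q_{(\sigma_i)}\cong Q_{(\tau_i)}$ as $F_m^0$-sets.
   Context: For a finite group $G$, a subgroup $H$ and $x\in G$, set $H_x=\bigcap_{i\in\mathbb{Z}}x^iHx^{-i}$ and $S_x=H_x\cdot x\subseteq G$; define $x\sim y$ if there is $h\in H$ with $hS_xh^{-1}=S_y$. $F_m$ is the free group on $z_1,\dots,z_m$, $\upsilon:F_m\to\mathbb{Z}$ is the homomorphism with $\upsilon(z_i)=1$ for all $i$, and $F_m^0=\ker\upsilon$. For $(\sigma_i)\in S_n^m$, $\phi_{(\sigma_i)}:F_m\to S_n$ is the homomorphism with $z_i\mapsto\sigma_i$, and $Q_{(\sigma_i)}$ is the set $\{1,\dots,n\}$ with the $F_m$-action via $\phi_{(\sigma_i)}$ (and, by restriction, the $F_m^0$-action). $C_{S_n}(\cdot)$ denotes the centralizer. *)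

(* Defs.v *)
From HB Require Import structures.
From mathcomp Require Import all_boot all_order all_algebra all_fingroup.
Set Implicit Arguments. Unset Strict Implicit. Unset Printing Implicit Defensive.

Local Open Scope group_scope.

Definition SnPow (n m : nat) : Type := {ffun 'I_m -> 'S_n}.

Section SnPowGroup.
Variables n m : nat.
HB.instance Definition _ := Finite.on (SnPow n m).

Definition spmul (x y : SnPow n m) : SnPow n m := [ffun j => x j * y j].
Definition spone : SnPow n m := [ffun _ => 1].
Definition spinv (x : SnPow n m) : SnPow n m := [ffun j => (x j)^-1].

Lemma spmulA : associative spmul.
Proof. by move=> x y z; apply/ffunP=> j; rewrite !ffunE mulgA. Qed.
Lemma spmul1 : left_id spone spmul.
Proof. by move=> x; apply/ffunP=> j; rewrite !ffunE mul1g. Qed.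
Lemma spmulV : left_inverse spone spinv spmul.
Proof. by move=> x; apply/ffunP=> j; rewrite !ffunE mulVg. Qed.

HB.instance Definition _ :=
  Finite_isGroup.Build (SnPow n m) spmulA spmul1 spmulV.

Lemma SnPow_mulE (x y : SnPow n m) j : (x * y) j = x j * y j.
Proof. by rewrite /= ffunE. Qed.

Definition tupleG (s : 'I_m -> 'S_n) : SnPow n m := [ffun j => s j].

Definition diag (h : 'S_n) : SnPow n m := [ffun _ => h].

Definition Hdiag : {set SnPow n m} := [set diag h | h : 'S_n].
End SnPowGroup.

Section Cores.
Variable gT : finGroupType.

(* H_x = \bigcap_{i in Z} x^i H x^{-i}.  Since x has finite order #[x], the
   powers x^i (i in Z) are exactly x^i for 0 <= i < #[x]; and in mathcomp
   H :^ y = y^-1 H y, so x^i H x^-i = H :^ (x ^- i). *)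
Definition Hcore (H : {set gT}) (x : gT) : {set gT} :=
  \bigcap_(i < #[x]) (H :^ (x ^- i)).

Definition Sx (H : {set gT}) (x : gT) : {set gT} := Hcore H x :* x.

Definition simH (H : {set gT}) (x y : gT) : Prop :=
  exists2 h, h \in H & Sx H x :^ h^-1 = Sx H y.
End Cores.

(* Elements of F_m are represented by (not necessarily reduced) words in the
   letters z_i^{+1} (i, false) and z_i^{-1} (i, true); every element of F_m is
   represented by a word, and upsilon and phi below are the homomorphisms
   described in the paper, computed on any representing word (they are
   invariant under free reduction). *)
Definition fword (m : nat) := seq ('I_m * bool).

Definition upsilon (m : nat) (w : fword m) : int :=
  (\sum_(l <- w) (if l.2 then (-1)%R else 1%R))%R.

Definition in_F0 (m : nat) (w : fword m) : Prop := upsilon w = 0%R.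

Definition phi (n m : nat) (s : 'I_m -> 'S_n) (w : fword m) : 'S_n :=
  \prod_(l <- w) (if l.2 then (s l.1)^-1 else s l.1).

(* Aut_{F_m^0}(Q_(sigma_i)): bijections of {1..n} commuting with the
   F_m^0-action on Q_(sigma_i) (action of w is the permutation phi w). *)
Definition AutF0 (n m : nat) (s : 'I_m -> 'S_n) (h : 'S_n) : Prop :=
  forall w : fword m, in_F0 w -> forall x : 'I_n, h (phi s w x) = phi s w (h x).

Definition inCentPhiF0 (n m : nat) (s : 'I_m -> 'S_n) (h : 'S_n) : Prop :=
  forall w : fword m, in_F0 w -> commute h (phi s w).

Definition isoF0 (n m : nat) (s t : 'I_m -> 'S_n) : Prop :=
  exists f : 'S_n, forall w : fword m, in_F0 w ->
    forall x : 'I_n, f (phi s w x) = phi t w (f x).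

(* Main.v *)
Require Import Defs.
From mathcomp Require Import all_boot all_order all_algebra all_fingroup.
From mathcomp Require Import cyclic zify.
Set Implicit Arguments. Unset Strict Implicit. Unset Printing Implicit Defensive.
Local Open Scope group_scope.

Section Main.
Variables n m : nat.
Implicit Types (s t : 'I_m -> 'S_n) (w : fword m) (a b c f p : 'S_n).

Lemma invE (x : SnPow n m) j : (x^-1) j = (x j)^-1.
Proof. by rewrite /= ffunE. Qed.
Lemma oneE j : (1 : SnPow n m) j = 1.
Proof. by rewrite /= ffunE. Qed.
Lemma expE (x : SnPow n m) i j : (x ^+ i) j = (x j) ^+ i.
Proof. elim: i => [|i IH]; first by rewrite !expg0 oneE.
by rewrite !expgS SnPow_mulE IH. Qed.
Lemma conjE (x y : SnPow n m) j : (x ^ y) j = (x j) ^ (y j).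
Proof. by rewrite /conjg !SnPow_mulE invE. Qed.
Lemma tupleE s j : tupleG s j = s j.
Proof. by rewrite /tupleG ffunE. Qed.
Lemma diagE a j : diag m a j = a.
Proof. by rewrite /diag ffunE. Qed.

Lemma phi_nil s : phi s [::] = 1.
Proof. by rewrite /phi big_nil. Qed.
Lemma phi_cons s l w : phi s (l :: w) = (if l.2 then (s l.1)^-1 else s l.1) * phi s w.
Proof. by rewrite /phi big_cons. Qed.
Lemma phi_cat s w1 w2 : phi s (w1 ++ w2) = phi s w1 * phi s w2.
Proof. by rewrite /phi big_cat. Qed.
Lemma eq_phi s t w : (forall j, s j = t j) -> phi s w = phi t w.
Proof. by move=> e; rewrite /phi; apply: eq_bigr => l _; rewrite e. Qed.
Lemma phi_conj s f w : phi (fun j => s j ^ f) w = phi s w ^ f.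
Proof.
elim: w => [|l w IH]; first by rewrite !phi_nil conj1g.
by rewrite !phi_cons IH conjMg; case: l.2; rewrite ?conjVg.
Qed.

Lemma ups_cons l w : upsilon (l :: w) = ((if l.2 then (-1)%R else 1%R) + upsilon w)%R.
Proof. by rewrite /upsilon big_cons. Qed.
Lemma ups_nil : upsilon ([::] : fword m) = 0%R.
Proof. by rewrite /upsilon big_nil. Qed.
Lemma ups_cat w1 w2 : upsilon (w1 ++ w2) = (upsilon w1 + upsilon w2)%R.
Proof. by rewrite /upsilon big_cat. Qed.

Lemma F0_cat w1 w2 : in_F0 w1 -> in_F0 w2 -> in_F0 (w1 ++ w2).
Proof. by rewrite /in_F0 ups_cat => -> ->. Qed.
Lemma F0_conj j (b : bool) w : in_F0 w -> in_F0 ((j, b) :: w ++ [:: (j, ~~ b)]).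
Proof.
rewrite /in_F0 ups_cons ups_cat ups_cons ups_nil => ->.
by case: b => /=; lia.
Qed.
Lemma F0_pair (j k : 'I_m) : in_F0 [:: (j, true); (k, false)].
Proof. by rewrite /in_F0 !ups_cons ups_nil /=; lia. Qed.

Definition E N w := (\sum_(l <- w) (if l.2 then N.-1 else 1))%N.
Lemma E_cons N l w : E N (l :: w) = ((if l.2 then N.-1 else 1) + E N w)%N.
Proof. by rewrite /E big_cons. Qed.

Lemma E_bal N w : 0 < N -> in_F0 w -> exists P, E N w = (N * P)%N.
Proof.
move=> N0.
have: exists P Q, upsilon w = (P%:Z - Q%:Z)%R /\ E N w = (P + N.-1 * Q)%N.
  elim: w => [|[j b] w [P [Q [u e]]]].
    by exists 0%N, 0%N; rewrite /E big_nil ups_nil GRing.subrr muln0.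
  rewrite ups_cons E_cons u e; case: b => /=.
    by exists P, Q.+1; split; lia.
  by exists P.+1, Q; split; lia.
move=> [P [Q [u e]]]; rewrite /in_F0 u => PQ; exists P; rewrite e.
have PQ' : P = Q by lia.
rewrite -PQ'; have: N = N.-1.+1 by rewrite prednK.
move=> ->; rewrite /=; lia.
Qed.

Definition Nn := #|[set: 'S_n]|.
Lemma Nn_gt0 : 0 < Nn.
Proof. exact: (cardG_gt0 [set: 'S_n]%G). Qed.
Lemma permN p : p ^+ Nn = 1.
Proof. by rewrite /Nn expg_cardG ?inE. Qed.
Lemma per_exp p k : p ^+ (k + Nn) = p ^+ k.
Proof. by rewrite expgD permN mulg1. Qed.
Lemma per_mulN p P : p ^+ (Nn * P) = 1.
Proof. by rewrite expgM permN expg1n. Qed.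

Lemma commJ (G : finGroupType) (x y z : G) : commute x y -> commute (x ^ z) (y ^ z).
Proof. by rewrite /commute -!conjMg => ->. Qed.

Variable j0 : 'I_m.

Lemma HC_cent s a : (forall i j, a ^ (s j ^+ i) = a ^ (s j0 ^+ i)) ->
  inCentPhiF0 s a.
Proof.
move=> HC w Hw.
pose h k := a ^ (s j0 ^+ k).
have hS k j : h k ^ s j = h k.+1.
  by rewrite /h -(HC k j) -conjgM -expgSr HC.
have hP k : h (k + Nn) = h k by rewrite /h per_exp.
have hV k j : h k ^ (s j)^-1 = h (k + Nn.-1).
  have e : h (k + Nn.-1) ^ s j = h k by rewrite hS -addnS prednK ?Nn_gt0 // hP.
  by rewrite -e conjgK.
have main : forall w k, h k ^ phi s w = h (k + E Nn w).
  elim=> [|[j b] v IH] k; first by rewrite phi_nil conjg1 /E big_nil addn0.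
  rewrite phi_cons E_cons conjgM; case: b => /=.
    by rewrite hV IH addnA.
  by rewrite hS IH addnA addn1.
have [P EP] := E_bal Nn_gt0 Hw.
apply/commgP/conjg_fixP; move: (main w 0%N); rewrite EP add0n /h per_mulN expg0 conjg1.
by [].
Qed.

Lemma cent_HC s a : inCentPhiF0 s a ->
  forall i j, a ^ (s j ^+ i) = a ^ (s j0 ^+ i).
Proof.
move=> Hc i j.
have phin : forall l k, phi s (nseq k l) = (if l.2 then (s l.1)^-1 else s l.1) ^+ k.
  move=> l k; elim: k => [|k IH]; first by rewrite phi_nil expg0.
  by rewrite /= phi_cons IH expgS.
have upsn : forall (l : 'I_m * bool) k, upsilon (nseq k l) = ((if l.2 then (-1)%R else 1%R) *+ k)%R.
  move=> l k; elim: k => [|k IH]; first by rewrite ups_nil.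
  by rewrite /= ups_cons IH GRing.mulrS.
have Hw : in_F0 (nseq i (j0, false) ++ nseq i (j, true)).
  by rewrite /in_F0 ups_cat !upsn /= GRing.mulNrn GRing.subrr.
have := Hc _ Hw; rewrite phi_cat !phin /= expVgn => /commgP/conjg_fixP.
rewrite conjgM => e.
by rewrite -[in LHS]e conjgKV.
Qed.


Lemma Hcore_char s y : y \in Hcore (Hdiag n m) (tupleG s) <->
  exists2 h, y = diag m h & inCentPhiF0 s h.
Proof.
set x := tupleG s.
have xE : forall i j, (x ^+ i) j = s j ^+ i by move=> i j; rewrite expE tupleE.
split.
- move/bigcapP => Hy.
  have Hy' : forall i, i < #[x] -> exists h, y ^ (x ^+ i) = diag m h.
    move=> i lt; have := Hy (Ordinal lt) isT.
    by rewrite mem_conjg invgK => /imsetP [h _ ->]; exists h.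
  have [a ea] := Hy' 0%N (order_gt0 x).
  rewrite expg0 conjg1 in ea.
  exists a => //; apply: HC_cent => i j.
  have ord1 : forall j, s j ^+ #[x] = 1 by move=> j'; rewrite -xE expg_order oneE.
  rewrite -(expg_mod _ (ord1 j)) -(expg_mod _ (ord1 j0)).
  have [h eh] := Hy' (i %% #[x])%N (ltn_pmod _ (order_gt0 x)).
  rewrite ea in eh.
  have := congr1 (fun F : SnPow n m => F j) eh; have := congr1 (fun F : SnPow n m => F j0) eh.
  by rewrite /= !conjE !xE !diagE => -> ->.
- move=> [a -> Ha]; apply/bigcapP => i _; rewrite mem_conjg invgK.
  apply/imsetP; exists (a ^ (s j0 ^+ i)) => //; apply/ffunP => j.
  rewrite conjE xE !diagE; exact: cent_HC.
Qed.

Lemma cent_twist s a w : inCentPhiF0 s a -> in_F0 w ->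
  phi (fun j => a * s j) w = phi s w.
Proof.
move=> Ha Hw.
pose u := s j0.
pose D k := (a * u) ^+ k * (u ^+ k)^-1.
have D0 : D 0%N = 1 by rewrite /D !expg0 invg1 mulg1.
have DS k : D k.+1 = a * (u * D k * u^-1) by rewrite /D !expgS invMg !mulgA.
have DP k : D (k + Nn)%N = D k by rewrite /D !per_exp.
have Dc : forall k v, in_F0 v -> commute (D k) (phi s v).
  elim=> [|k IH] v Hv; first by rewrite D0; apply: commute_sym; apply: commute1.
  rewrite DS; apply: commute_sym; apply: commuteM; apply: commute_sym; first exact: Ha.
  have -> : u * D k * u^-1 = D k ^ u^-1 by rewrite /conjg invgK !mulgA.
  rewrite -[phi s v](conjgK u); apply: commJ.
  have -> : phi s v ^ u = phi s ((j0, true) :: v ++ [:: (j0, false)]).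
    by rewrite phi_cons phi_cat phi_cons phi_nil mulg1 /conjg /= mulgA.
  exact/IH/F0_conj.
have KI k j : D k.+1 * s j = a * s j * D k.
  have c : commute (D k) (u^-1 * s j).
    by have := Dc k _ (F0_pair j0 j); rewrite !phi_cons phi_nil /= mulg1.
  rewrite DS.
  have -> : a * (u * D k * u^-1) * s j = a * (u * (D k * (u^-1 * s j))) by rewrite !mulgA.
  rewrite c -[RHS]mulgA; congr (a * _); by rewrite mulgA mulVKg.
have inv : forall v, phi (fun j => a * s j) v = D (E Nn v) * phi s v.
  elim=> [|[j b] v IH]; first by rewrite !phi_nil /E big_nil D0 mulg1.
  rewrite !phi_cons E_cons IH; case: b => /=.
  - have e : D (Nn.-1 + E Nn v)%N = (a * s j)^-1 * (D (E Nn v) * s j).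
      have := KI (Nn.-1 + E Nn v)%N j.
      rewrite -addSn prednK ?Nn_gt0 // [(Nn + _)%N]addnC DP => ->.
      by rewrite mulKg.
    by rewrite e !mulgA mulgK.
  - by rewrite add1n [RHS]mulgA KI -[RHS]mulgA.
have [P EP] := E_bal Nn_gt0 Hw.
by rewrite inv EP /D !per_mulN invg1 !mul1g.
Qed.

Lemma twist_cent s c :
  (forall w, in_F0 w -> phi (fun j => c * s j) w = phi s w) -> inCentPhiF0 s c.
Proof.
move=> H w Hw.
have Hin := F0_conj j0 true Hw.
have Hout := F0_conj j0 false Hin.
have e1 : phi (fun j => c * s j) ((j0, false) :: ((j0, true) :: w ++ [:: (j0, false)]) ++ [:: (j0, ~~ false)])
   = c * phi s w * c^-1.
  rewrite phi_cons phi_cat (H _ Hin) !phi_cons phi_cat !phi_cons !phi_nil /= !mulg1.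
  by rewrite invMg !mulgA !mulgK.
have e2 : phi s ((j0, false) :: ((j0, true) :: w ++ [:: (j0, false)]) ++ [:: (j0, ~~ false)])
   = phi s w.
  rewrite phi_cons phi_cat !phi_cons phi_cat !phi_cons !phi_nil /= !mulg1.
  by rewrite !mulgA mulgV mul1g mulgK.
move: (H _ Hout); rewrite e1 e2 => e.
by rewrite /commute -{2}e mulgVK.
Qed.

Lemma cent_mul s a b : inCentPhiF0 s a -> inCentPhiF0 s b -> inCentPhiF0 s (a * b).
Proof.
move=> Ha Hb w Hw; apply: commute_sym; apply: commuteM; apply: commute_sym;
  [exact: Ha | exact: Hb].
Qed.
Lemma cent_inv s a : inCentPhiF0 s a -> inCentPhiF0 s a^-1.
Proof. by move=> Ha w Hw; apply: commute_sym; apply: commuteV; apply: commute_sym; apply: Ha. Qed.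
Lemma cent_conjl s a f : inCentPhiF0 s a -> inCentPhiF0 (fun j => s j ^ f) (a ^ f).
Proof. by move=> Ha w Hw; rewrite phi_conj; apply: commJ; apply: Ha. Qed.
Lemma cent_eq s t a : (forall w, in_F0 w -> phi s w = phi t w) ->
  inCentPhiF0 s a -> inCentPhiF0 t a.
Proof. by move=> e Ha w Hw; rewrite -e //; apply: Ha. Qed.

Lemma aut_cent s h : AutF0 s h <-> inCentPhiF0 s h.
Proof.
split=> H w Hw.
- by apply/permP => x; rewrite !permM (H w Hw).
- by move=> x; have := congr1 (fun q : 'S_n => q x) (H w Hw : h * phi s w = phi s w * h); rewrite !permM => ->.
Qed.

Lemma conj_pt f p x : f (p x) = (p ^ f) (f x).
Proof. by rewrite /conjg !permM permK. Qed.

Lemma sim_iso s t : simH (Hdiag n m) (tupleG s) (tupleG t) <-> isoF0 s t.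
Proof.
split.
- move=> [h /imsetP [g _ ->] Heq].
  have : tupleG t \in Sx (Hdiag n m) (tupleG s) :^ (diag m g)^-1.
    rewrite Heq /Sx mem_rcoset mulgV; apply/Hcore_char; exists 1.
      by apply/ffunP => j; rewrite oneE.
    by move=> w Hw; apply: commute_sym; apply: commute1.
  rewrite mem_conjg invgK /Sx mem_rcoset => /Hcore_char [a Ha Hc].
  have Ht : forall j, t j = (a * s j) ^ g^-1.
    move=> j; have := congr1 (fun F : SnPow n m => F j) Ha.
    rewrite SnPow_mulE conjE invE !tupleE ?diagE => <-.
    by rewrite mulgVK conjgK.
  exists g^-1 => w Hw x.
  have -> : phi t w = phi s w ^ g^-1.
    by rewrite (eq_phi _ Ht) phi_conj cent_twist.
  exact: conj_pt.
- move=> [f Hf].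
  have Hphi : forall w, in_F0 w -> phi t w = phi s w ^ f.
    move=> w Hw; apply/permP => x.
    by rewrite -[x](permKV f) -conj_pt Hf.
  pose r := fun j => s j ^ f.
  have Hr : forall w, in_F0 w -> phi r w = phi t w.
    by move=> w Hw; rewrite phi_conj Hphi.
  pose c := t j0 * (r j0)^-1.
  have Htc : forall j, t j = c * r j.
    move=> j; have := Hr _ (F0_pair j j0); rewrite !phi_cons !phi_nil /= !mulg1 => e.
    have e' : t j0 = t j * ((r j)^-1 * r j0) by rewrite e mulVKg.
    have gl : forall x y z : 'S_n, x = x * (y^-1 * z) * z^-1 * y by move=> x y z; rewrite mulgA mulgK mulgVK.
    by rewrite /c e'; apply: gl.
  have Hc : inCentPhiF0 r c.
    by apply: twist_cent => w Hw; rewrite -(eq_phi _ Htc) Hr.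
  exists (diag m f^-1); first by apply/imsetP; exists f^-1.
  apply/setP => z; rewrite mem_conjg invgK /Sx !mem_rcoset.
  apply/idP/idP.
  + move/Hcore_char => [a Ha Hca]; apply/Hcore_char.
    exists (a ^ f * c^-1).
      apply/ffunP => j; have := congr1 (fun F : SnPow n m => F j) Ha.
      rewrite SnPow_mulE conjE invE tupleE ?diagE => e.
      have ez : z j = (a * s j) ^ f by rewrite -e mulgVK conjgKV.
      rewrite SnPow_mulE invE tupleE ?diagE Htc ez conjMg invMg.
      by rewrite mulgA mulgK.
    apply: (cent_eq Hr); apply: cent_mul; [exact: cent_conjl | exact: cent_inv].
  + move/Hcore_char => [b Hb Hcb]; apply/Hcore_char.
    exists ((b * c) ^ f^-1).
      apply/ffunP => j; have := congr1 (fun F : SnPow n m => F j) Hb.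
      rewrite SnPow_mulE invE tupleE ?diagE => e.
      have ez : z j = b * c * r j by rewrite -mulgA -Htc -e mulgVK.
      rewrite SnPow_mulE conjE invE tupleE ?diagE ez conjMg /r conjgK.
      by rewrite mulgK.
    have : inCentPhiF0 (fun j => r j ^ f^-1) ((b * c) ^ f^-1).
      apply: cent_conjl; apply: cent_mul => //.
      by apply: (cent_eq _ Hcb) => w Hw; rewrite Hr.
    by apply: cent_eq => w Hw; apply: eq_phi => j; rewrite /r conjgK.
Qed.

End Main.


Theorem lemma5p2 (n m : nat) (n_ge1 : 0 < n) (m_ge1 : 0 < m) :
  (forall s : 'I_m -> 'S_n,
     (forall y : SnPow n m,
        y \in Hcore (Hdiag n m) (tupleG s) <-> exists2 h, y = diag m h & AutF0 s h)
     /\ (forall h : 'S_n, AutF0 s h <-> inCentPhiF0 s h))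
  /\
  (forall s t : 'I_m -> 'S_n,
     simH (Hdiag n m) (tupleG s) (tupleG t) <-> isoF0 s t).
Proof.
have j0 : 'I_m := Ordinal m_ge1.
split.
- move=> s; split.
  + move=> y; rewrite (Hcore_char j0); split; move=> [h e H]; exists h => //;
      by apply/aut_cent.
  + exact: aut_cent.
- exact: sim_iso j0.
Qed.
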